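(* Let $(G,s,t)$ be an oriented serial superedge with principal subgraphs $(G_1,s_1,t_1),\dots,(G_k,s_k,t_k)$ (so $s_1=s$, $t_i=s_{i+1}$, $t_k=t$), each $G_i$ non-serial. For each $i$ let $\mathcal{T}_i\subseteq\mathsf{ST}(G_i)$ contain exactly one spanning tree from each orbit of $\mathsf{ST}(G_i)$ under $\mathrm{Aut}_{\mathrm{or}}(G_i,s_i,t_i)$. Then the set $\{T_1\cup\dots\cup T_k : T_i\in\mathcal{T}_i\text{ for }1\le i\le k\}$ consists of spanning trees of $G$ and contains exactly one spanning tree from each orbit of $\mathsf{ST}(G)$ under $\mathrm{Aut}_{\mathrm{or}}(G,s,t)$.
   Context: All graphs are finite, simple and undirected. An oriented series-parallel graph is a triple $(G,s,t)$ where $G$ is a graph and $s\neq t$ are vertices, defined recursively: (i) $G$ is a single edge with vertex set $\{s,t\}$; or (ii) (serial superedge) there are $k\ge 2$ oriented series-parallel graphs $(G_1,s_1,t_1),\dots,(G_k,s_k,t_k)$ with $s_1=s$, $t_k=t$, $t_i=s_{i+1}$ for $1\le i<k$, $V(G_i)\cap V(G_{i+1})=\{s_{i+1}\}$, $V(G_i)\cap V(G_j)=\emptyset$ for $|i-j|\ge2$, and $G=G_1\cup\dots\cup G_k$; or (iii) (parallel superedge) there are $k\ge2$ oriented series-parallel graphs $(G_1,s,t),\dots,(G_k,s,t)$ with $V(G_i)\cap V(G_j)=\{s,t\}$ for $i\neq j$ and $G=G_1\cup\dots\cup G_k$. The $G_i$ are the principal subgraphs. A graph is non-serial if it is not a serial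 superedge. For an oriented series-parallel graph $(H,u,v)$, $\mathrm{Aut}_{\mathrm{or}}(H,u,v)$ is the group of automorphisms of $H$ fixing $u$ and $v$, acting on subgraphs of $H$; $\mathsf{ST}(H)$ is the set of spanning trees of $H$. Two subgraphs $A,B$ are in the same orbit iff $A=\sigma(B)$ for some $\sigma$ in the group. *)

(* Defs.v *)
From mathcomp Require Import all_boot fingroup perm.
Set Implicit Arguments. Unset Strict Implicit. Unset Printing Implicit Defensive.

(* A finite simple graph on (a subset of) the finite vertex universe T:
   a vertex set and a set of edges, each edge being a 2-element vertex set. *)
Notation graph T := ({set T} * {set {set T}})%type.

Section SP.
Variable T : finType.

Definition gV (G : graph T) : {set T} := G.1.
Definition gE (G : graph T) : {set {set T}} := G.2.

Definition gunion (k : nat) (Gs : nat -> graph T) : graph T :=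
  (\bigcup_(i < k) gV (Gs i), \bigcup_(i < k) gE (Gs i)).

Definition serial_cond (k : nat) (Gs : nat -> graph T) (ss ts : nat -> T)
    (G : graph T) (s t : T) : Prop :=
  [/\ 2 <= k, ss 0 = s, ts k.-1 = t,
      (forall i, i.+1 < k -> ts i = ss i.+1) &
   [/\
      (forall i, i.+1 < k -> gV (Gs i) :&: gV (Gs i.+1) = [set ss i.+1]),
      (forall i j, i < k -> j < k -> i.+2 <= j -> gV (Gs i) :&: gV (Gs j) = set0)
    & G = gunion k Gs]].

Definition parallel_cond (k : nat) (Gs : nat -> graph T) (ss ts : nat -> T)
    (G : graph T) (s t : T) : Prop :=
  [/\ 2 <= k, (forall i, i < k -> ss i = s /\ ts i = t),
      (forall i j, i < k -> j < k -> i != j -> gV (Gs i) :&: gV (Gs j) = [set s; t])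
    & G = gunion k Gs].

Inductive osp : graph T -> T -> T -> Prop :=
| osp_edge s t : s != t -> osp ([set s; t], [set [set s; t]]) s t
| osp_serial k Gs ss ts G s t :
    s != t -> serial_cond k Gs ss ts G s t ->
    (forall i, i < k -> osp (Gs i) (ss i) (ts i)) -> osp G s t
| osp_parallel k Gs ss ts G s t :
    s != t -> parallel_cond k Gs ss ts G s t ->
    (forall i, i < k -> osp (Gs i) (ss i) (ts i)) -> osp G s t.

Definition serial_sp (G : graph T) (s t : T) : Prop :=
  s != t /\
  exists k Gs ss ts, serial_cond k Gs ss ts G s t /\
    (forall i, i < k -> osp (Gs i) (ss i) (ts i)).

Definition nonserial (G : graph T) (s t : T) : Prop :=
  osp G s t /\ ~ serial_sp G s t.

Definition adj (F : {set {set T}}) : rel T := fun x y => [set x; y] \in F.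

Definition is_tree (H : graph T) : Prop :=
  (forall x y, x \in gV H -> y \in gV H -> connect (adj (gE H)) x y) /\
  (forall c : seq T, 3 <= size c -> ~ ucycle (adj (gE H)) c).

Definition spanning_tree (G H : graph T) : Prop :=
  [/\ gV H = gV G, gE H \subset gE G & is_tree H].

(* automorphisms of G fixing s and t (as permutations of the vertex
   universe; only their restriction to V(G) matters for the action) *)
Definition aut_or (G : graph T) (s t : T) (g : {perm T}) : Prop :=
  [/\ g @: gV G = gV G, [set g @: e | e : {set T} in gE G] = gE G, g s = s & g t = t].

Definition gact (g : {perm T}) (A : graph T) : graph T :=
  (g @: gV A, [set g @: e | e : {set T} in gE A]).

Definition same_orbit (G : graph T) (s t : T) (A B : graph T) : Prop :=
  exists g, aut_or G s t g /\ A = gact g B.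

Definition orbit_transversal (G : graph T) (s t : T) (TT : graph T -> Prop) : Prop :=
  (forall X, TT X -> spanning_tree G X) /\
  (forall Y, spanning_tree G Y -> exists! X, TT X /\ same_orbit G s t X Y).

End SP.

(* Main.v *)
Require Import Defs.
From mathcomp Require Import all_boot fingroup perm.
From mathcomp Require Import zify.
Set Implicit Arguments. Unset Strict Implicit. Unset Printing Implicit Defensive.


Section Gen.
Variable T : finType.
Implicit Types (F : {set {set T}}) (x y u v c : T) (H : graph T).

Definition adjav F c : rel T := fun x y => [&& adj F x y, x != c & y != c].

Lemma adj_sym F : symmetric (adj F).
Proof. by move=> x y; rewrite /adj setUC. Qed.

Lemma adjav_sym F c : symmetric (adjav F c).
Proof. by move=> x y; rewrite /adjav adj_sym [(x != c) && _]andbC. Qed.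

Lemma adjav_adj F c : subrel (adjav F c) (adj F).
Proof. by move=> x y /andP[]. Qed.

Lemma conn_inv (e : rel T) (A : Type) (f : T -> A) x y :
  (forall u v, e u v -> f u = f v) -> connect e x y -> f x = f y.
Proof.
move=> H /connectP[p]; elim: p x => [|z p IH] x /=; first by move=> _ ->.
by case/andP=> /H -> /IH.
Qed.

Lemma conn_map (e e' : rel T) (f : T -> T) x y :
  (forall u v, e u v -> f u = f v \/ e' (f u) (f v)) ->
  connect e x y -> connect e' (f x) (f y).
Proof.
move=> H /connectP[p]; elim: p x => [|z p IH] x /=.
  by move=> _ ->; exact: connect0.
case/andP=> /H [->|exz] /IH hp yl; first exact: hp.
exact: connect_trans (connect1 exz) (hp yl).
Qed.

Lemma conn_sub (e e' : rel T) x y : subrel e e' -> connect e x y -> connect e' x y.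
Proof. by move=> h; apply: connect_sub => u v /h; apply: connect1. Qed.

Definition acyc2 F := forall x y, x != y -> [set x; y] \in F ->
  ~ connect (adj (F :\ [set x; y])) x y.

Lemma C1 F : (forall c : seq T, 3 <= size c -> ~ ucycle (adj F) c) -> acyc2 F.
Proof.
move=> H x y xy exy /connectP[p pp yl].
move: yl; case: (shortenP pp) => p' pp' up' _ yl.
have sub : subrel (adj (F :\ [set x; y])) (adj F).
  by move=> u v; rewrite /adj in_setD1 => /andP[].
apply: (H (x :: p')).
  case: p' pp' up' yl => [|z [|w q]] //=.
  - by move=> _ _ yx; rewrite yx eqxx in xy.
  - move=> /andP[hz _] _ yz; subst z; move: hz.
    by rewrite /adj in_setD1 eqxx.
rewrite /ucycle up' andbT /= rcons_path -yl (sub_path sub pp') /= adj_sym.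
exact: exy.
Qed.

Lemma C2 F : acyc2 F -> forall c : seq T, 3 <= size c -> ~ ucycle (adj F) c.
Proof.
move=> H [|x [|y [|z q]]] //= _.
set q' := z :: q.
rewrite /ucycle /= => /andP[/andP[exy pq] /andP[xn /andP[yn uq]]].
have xy : x != y by apply: contraNneq xn => ->; exact: mem_head.
apply: (H x y xy exy).
rewrite (sym_connect_sym (adj_sym _)).
apply/connectP; exists (rcons q' x); last by rewrite last_rcons.
have : path (adj F) y q' && adj F (last y q') x by rewrite -rcons_path.
case/andP=> pq1 pq2; rewrite rcons_path; apply/andP; split.
  apply: (@sub_in_path _ (fun u => u != x) (adj F)).
  - move=> u v hu hv euv.
    have {}hu : u != x := hu. have {}hv : v != x := hv.
    rewrite /adj in_setD1; rewrite /adj in euv.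
    rewrite euv andbT; apply/eqP => E.
    have: x \in [set u; v] by rewrite E set21.
    by rewrite !inE => /orP[] /eqP xe; [move: hu | move: hv]; rewrite xe eqxx.
  - apply/allP => w wq /=; apply/eqP => wx; subst w.
    by rewrite wq in xn.
  - exact: pq1.
rewrite /adj in_setD1; rewrite /adj in pq2; rewrite pq2 andbT.
have lq : last y q' \in q' by rewrite /q' /= mem_last.
apply/eqP => E.
have: y \in [set last y q'; x] by rewrite E set22.
rewrite !inE => /orP[] /eqP yl.
  by rewrite -yl in lq; rewrite lq in yn.
by rewrite yl eqxx in xy.
Qed.


Lemma gunionV k (Gs : nat -> graph T) v :
  reflect (exists2 i, i < k & v \in gV (Gs i)) (v \in gV (gunion k Gs)).
Proof.
apply: (iffP bigcupP) => [[i _ hi]|[i ik hi]]; first by exists i.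
by exists (Ordinal ik).
Qed.

Lemma gunionE k (Gs : nat -> graph T) e :
  reflect (exists2 i, i < k & e \in gE (Gs i)) (e \in gE (gunion k Gs)).
Proof.
apply: (iffP bigcupP) => [[i _ hi]|[i ik hi]]; first by exists i.
by exists (Ordinal ik).
Qed.

Definition edge_ok H := forall e, e \in gE H ->
  exists x y, [/\ x != y, e = [set x; y], x \in gV H & y \in gV H].

Lemma adj_in H u v : edge_ok H -> adj (gE H) u v -> u \in gV H /\ v \in gV H.
Proof.
move=> ok /ok[x [y [_ E xV yV]]].
have hu : u \in [set x; y] by rewrite -E set21.
have hv : v \in [set x; y] by rewrite -E set22.
by move: hu hv; rewrite !inE => /orP[]/eqP-> /orP[]/eqP->.
Qed.

Lemma edge_ok_gunion k (Gs : nat -> graph T) :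
  (forall i, i < k -> edge_ok (Gs i)) -> edge_ok (gunion k Gs).
Proof.
move=> h e /gunionE[i ik /(h i ik)[x [y [xy E xV yV]]]].
by exists x, y; split=> //; apply/gunionV; exists i.
Qed.

Lemma adj_gunion k (Gs : nat -> graph T) i :
  i < k -> subrel (adj (gE (Gs i))) (adj (gE (gunion k Gs))).
Proof. by move=> ik u v h; apply/gunionE; exists i. Qed.

Lemma adjav_gunion k (Gs : nat -> graph T) i c :
  i < k -> subrel (adjav (gE (Gs i)) c) (adjav (gE (gunion k Gs)) c).
Proof.
by move=> ik u v; rewrite /adjav => /and3P[h -> ->]; rewrite !andbT; apply: adj_gunion h.
Qed.

Lemma adj_avoid_gunion k (Gs : nat -> graph T) i c :
  i < k -> edge_ok (Gs i) -> c \notin gV (Gs i) ->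
  subrel (adj (gE (Gs i))) (adjav (gE (gunion k Gs)) c).
Proof.
move=> ik ok cn u v h; have [uV vV] := adj_in ok h.
rewrite /adjav (adj_gunion ik h) /=.
by apply/andP; split; apply: contraNneq cn => <-.
Qed.

Definition ospP H a b := [/\ a \in gV H, b \in gV H, a != b, edge_ok H &
  connect (adj (gE H)) a b /\
  forall v, v \in gV H -> v != b -> connect (adjav (gE H) b) a v].

Lemma ospP_conn H a b v : ospP H a b -> v \in gV H -> connect (adj (gE H)) a v.
Proof.
case=> _ _ _ _ [hab h] vV; case: (eqVneq v b) => [->//|vb].
exact: conn_sub (@adjav_adj _ b) (h v vV vb).
Qed.

End Gen.

Section Serial.
Variables (T : finType) (k : nat) (Gs : nat -> graph T) (ss ts : nat -> T)
  (G : graph T) (s t : T).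
Hypothesis Hc : serial_cond k Gs ss ts G s t.
Hypothesis Hb : forall i, i < k -> ospP (Gs i) (ss i) (ts i).

Local Notation V i := (gV (Gs i)).
Local Notation E i := (gE (Gs i)).
Set Default Proof Using "All".

Lemma k2 : 1 < k. Proof. by case: Hc. Qed.
Lemma s0 : ss 0 = s. Proof. by case: Hc. Qed.
Lemma tk : ts k.-1 = t. Proof. by case: Hc. Qed.
Lemma tsS i : i.+1 < k -> ts i = ss i.+1. Proof. by case: Hc => _ _ _ h _; apply: h. Qed.
Lemma GU : G = gunion k Gs. Proof. by case: Hc => _ _ _ _ []. Qed.

Lemma P2 i j x : i < j -> j < k -> x \in V i -> x \in V j -> j = i.+1 /\ x = ss j.
Proof.
case: Hc => _ _ _ _ [h1 h2 _] ij jk xi xj.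
case: (eqVneq j i.+1) => [ej|ne].
  subst j; have: x \in V i :&: V i.+1 by rewrite inE xi.
  by rewrite h1 // inE => /eqP.
have: x \in V i :&: V j by rewrite inE xi.
by rewrite h2 ?inE //; lia.
Qed.

Lemma VV2 i j x y : i < k -> j < k -> i != j -> x \in V i -> x \in V j ->
  y \in V i -> y \in V j -> x = y.
Proof.
move=> ik jk; rewrite neq_ltn => /orP[] ij xi xj yi yj.
  by have [_ ->] := P2 ij jk xi xj; have [_ ->] := P2 ij jk yi yj.
by have [_ ->] := P2 ij ik xj xi; have [_ ->] := P2 ij ik yj yi.
Qed.

Lemma ssV i : i < k -> ss i \in V i. Proof. by move/Hb; case. Qed.
Lemma tsV i : i < k -> ts i \in V i. Proof. by move/Hb; case. Qed.
Lemma sts i : i < k -> ss i != ts i. Proof. by move/Hb; case. Qed.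
Lemma okb i : i < k -> edge_ok (Gs i). Proof. by move/Hb; case. Qed.

Lemma okG : edge_ok G.
Proof. by rewrite GU; apply: edge_ok_gunion => i /okb. Qed.

Lemma VG v : reflect (exists2 i, i < k & v \in V i) (v \in gV G).
Proof. by rewrite GU; apply: gunionV. Qed.

Lemma EG e : reflect (exists2 i, i < k & e \in E i) (e \in gE G).
Proof. by rewrite GU; apply: gunionE. Qed.

Lemma chainc (e : rel T) m : m < k ->
  (forall i, i <= m -> connect e (ss i) (ts i)) -> connect e s (ts m).
Proof.
elim: m => [|m IH] mk h; first by rewrite -s0; exact: h.
apply: connect_trans (IH (ltnW mk) (fun i hi => h i (leqW hi))) _.
by rewrite tsS //; exact: h.
Qed.

Lemma reach (e : rel T) i v : i < k ->
  (forall i', i' < i -> connect e (ss i') (ts i')) -> connect e (ss i) v ->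
  connect e s v.
Proof.
case: i => [|i] ik h hv; first by rewrite -s0.
apply: connect_trans (@chainc e i _ _) _; first by lia.
  by move=> i' hi'; apply: h; lia.
by rewrite tsS.
Qed.

Lemma t_notin i : i < k.-1 -> t \notin V i.
Proof.
move=> ik; apply/negP => ti.
have k1 : k.-1 < k by have := k2; lia.
have tV : t \in V k.-1 by rewrite -tk; apply: tsV.
have [_ e] := P2 ik k1 ti tV.
by have := sts k1; rewrite tk -e eqxx.
Qed.

Lemma blk_adj i : i < k -> subrel (adj (E i)) (adj (gE G)).
Proof. by rewrite GU; apply: adj_gunion. Qed.

Lemma blk_adjav i c : i < k -> subrel (adjav (E i) c) (adjav (gE G) c).
Proof. by rewrite GU; apply: adjav_gunion. Qed.

Lemma blk_avoid i c : i < k -> c \notin V i -> subrel (adj (E i)) (adjav (gE G) c).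
Proof. by move=> ik; rewrite GU; apply: adj_avoid_gunion => //; apply: okb. Qed.

Lemma blk_conn i : i < k -> connect (adj (E i)) (ss i) (ts i).
Proof. by move/Hb; case=> _ _ _ _ []. Qed.

Lemma blk_O5 i v : i < k -> v \in V i -> v != ts i ->
  connect (adjav (E i) (ts i)) (ss i) v.
Proof. by move/Hb; case=> _ _ _ _ [_ h]; apply: h. Qed.

Lemma serial_ospP : s != t -> ospP G s t.
Proof.
move=> st; have k0 : 0 < k by have := k2; lia.
have k1 : k.-1 < k by have := k2; lia.
split=> //.
- by apply/VG; exists 0 => //; rewrite -s0; apply: ssV.
- by apply/VG; exists k.-1 => //; rewrite -tk; apply: tsV.
- exact: okG.
split.
  rewrite -tk; apply: chainc => // i ik.
  have ik' : i < k by lia.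
  exact: conn_sub (blk_adj ik') (blk_conn ik').
move=> v /VG[i ik vi] vt.
apply: (@reach _ i) => //.
  move=> i' hi'; have ik' : i' < k by lia.
  have ik1 : i' < k.-1 by lia.
  exact: conn_sub (blk_avoid ik' (t_notin ik1)) (blk_conn ik').
case: (ltnP i k.-1) => hi.
  by apply: conn_sub (blk_avoid ik (t_notin hi)) (ospP_conn (Hb ik) vi).
have ei : i = k.-1 by lia.
rewrite ei in vi *; apply: conn_sub (@blk_adjav k.-1 t k1) _.
by rewrite -{1}tk; apply: blk_O5 => //; rewrite tk.
Qed.

End Serial.
Unset Default Proof Using.

Lemma osp_P (T : finType) (H : graph T) a b : osp H a b -> ospP H a b.
Proof.
elim => {H a b} [a b ab | k Gs ss ts G s t st Hc _ IH | k Gs ss ts G s t st Hc _ IH].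
- split => //; rewrite /gV /gE ?set21 ?set22 //.
  + by move=> e; rewrite inE => /eqP->; exists a, b; rewrite /gV set21 set22.
  split; first by apply: connect1; rewrite /adj set11.
  by move=> v; rewrite !inE => /orP[]/eqP-> //; rewrite eqxx.
- exact: serial_ospP Hc IH st.
case: Hc => k2 hst _ GU.
have k0 : 0 < k by lia.
have [s0 t0] := hst 0 k0.
have IH' : forall i, i < k -> ospP (Gs i) s t.
  by move=> i ik; have := IH i ik; have [-> ->] := hst i ik.
subst G; split=> //.
- by apply/gunionV; exists 0 => //; case: (IH' 0 k0).
- by apply/gunionV; exists 0 => //; case: (IH' 0 k0).
- by apply: edge_ok_gunion => i /IH'; case.
split.
  by apply: conn_sub (@adj_gunion _ k Gs 0 k0) _; case: (IH' 0 k0) => _ _ _ _ [].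
move=> v /gunionV[i ik vi] vt.
apply: conn_sub (@adjav_gunion _ k Gs i t ik) _.
by case: (IH' i ik) => _ _ _ _ [_ h]; apply: h.
Qed.

Lemma nonserial_avoid (T : finType) (H : graph T) a b v :
  nonserial H a b -> v != a -> v != b -> connect (adjav (gE H) v) a b.
Proof.
case=> hosp; case: hosp.
- move=> {}a {}b ab _ va vb; apply: connect1.
  by rewrite /adjav /adj /gE set11 eq_sym va eq_sym vb.
- move=> k Gs ss ts G s t st Hc Hb ns; exfalso; apply: ns.
  by split=> //; exists k, Gs, ss, ts.
move=> k Gs ss ts G s t st Hc Hb _ vs vt.
case: Hc => k2 hst hI GU; subst G.
have IH' : forall i, i < k -> ospP (Gs i) s t.
  by move=> i ik; have := osp_P (Hb i ik); have [-> ->] := hst i ik.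
have [j [jk vj]] : exists j, j < k /\ v \notin gV (Gs j).
  case: (boolP (v \in gV (Gs 0))) => v0; last by exists 0; split => //; lia.
  exists 1; split; first by lia.
  apply/negP => v1.
  have : v \in gV (Gs 0) :&: gV (Gs 1) by rewrite inE v0.
  rewrite hI //; last by lia.
  by rewrite !inE => /orP[] /eqP e; [rewrite e eqxx in vs | rewrite e eqxx in vt].
apply: conn_sub (@adj_avoid_gunion _ k Gs j v jk _ vj) _.
  by case: (IH' j jk).
by case: (IH' j jk) => _ _ _ _ [].
Qed.

Section AutGen.
Variables (T : finType) (F : {set {set T}}) (g : {perm T}).
Hypothesis hF : [set g @: e | e : {set T} in F] = F.

Lemma adj_g u v : adj F (g u) (g v) = adj F u v.
Proof.
rewrite /adj -{1}hF.
have -> : [set g u; g v] = g @: [set u; v] by rewrite imsetU1 imset_set1.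
by rewrite mem_imset //; apply: imset_inj; apply: perm_inj.
Qed.

Lemma adjav_g c u v : adjav F (g c) (g u) (g v) = adjav F c u v.
Proof. by rewrite /adjav adj_g !(inj_eq perm_inj). Qed.

Lemma conn_g c x y : connect (adjav F (g c)) (g x) (g y) = connect (adjav F c) x y.
Proof.
apply/idP/idP => h.
  have := @conn_map _ (adjav F (g c)) (adjav F c) (g^-1)%g _ _ _ h.
  rewrite !permK; apply => u v huv; right.
  by rewrite -adjav_g !permKV.
apply: (@conn_map _ (adjav F c) (adjav F (g c)) g) h => u v huv; right.
by rewrite adjav_g.
Qed.
End AutGen.

Section Main.
Variables (T : finType) (k : nat) (Gs : nat -> graph T) (ss ts : nat -> T)
  (G : graph T) (s t : T).
Hypothesis Hc : serial_cond k Gs ss ts G s t.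
Hypothesis Hn : forall i, i < k -> nonserial (Gs i) (ss i) (ts i).

Local Notation V i := (gV (Gs i)).
Local Notation E i := (gE (Gs i)).
Local Notation EGG := (gE G).

Lemma Hb : forall i, i < k -> ospP (Gs i) (ss i) (ts i).
Proof. by move=> i /Hn [h _]; apply: osp_P. Qed.

Let k2 := k2 Hc Hb.
Let s0 := s0 Hc Hb.
Let tk := tk Hc Hb.
Let tsS := tsS Hc Hb.

Lemma block_avoid i c : i < k -> c != ss i -> c != ts i ->
  connect (adjav EGG c) (ss i) (ts i).
Proof.
move=> ik h1 h2; apply: conn_sub (blk_adjav Hc Hb ik) _.
exact: nonserial_avoid (Hn ik) h1 h2.
Qed.

Lemma ts_notin_lower i b : i < k -> b < i -> ts i \notin V b.
Proof.
move=> ik bi; apply/negP => hb.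
have [_ e] := P2 Hc Hb bi ik hb (tsV Hc Hb ik).
by have := sts Hc Hb ik; rewrite e eqxx.
Qed.

Lemma ts_inj a b : a < k -> b < k -> ts a = ts b -> a = b.
Proof.
move=> ak bk e; case: (ltngtP a b) => // h.
  by have := ts_notin_lower bk h; rewrite -e (tsV Hc Hb ak).
by have := ts_notin_lower ak h; rewrite e (tsV Hc Hb bk).
Qed.

Lemma ss_ts i j : i <= j -> j < k -> ts j != ss i.
Proof.
rewrite leq_eqVlt => /orP[/eqP -> jk|ij jk]; first by rewrite eq_sym (sts Hc Hb jk).
apply: contraNneq (ts_notin_lower jk ij) => ->; exact: (@ssV _ _ _ _ _ _ _ _ Hc Hb i (ltn_trans ij jk)).
Qed.

Lemma ts_ts i j : i < j -> j < k -> ts j != ts i.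
Proof.
move=> ij jk; apply/eqP => e; have := ts_inj jk _ e; lia.
Qed.

Lemma junc_s j : j < k -> ts j != s.
Proof. by move=> jk; rewrite -s0; apply: ss_ts. Qed.

Lemma junc_t j : j < k.-1 -> ts j != t.
Proof.
move=> jk; rewrite -tk; apply/eqP => e; have := ts_inj _ _ e; lia.
Qed.

Lemma SepA j d : j < k.-1 -> connect (adjav EGG (ts j)) s d ->
  d != ts j /\ exists2 b, b <= j & d \in V b.
Proof.
move=> jk h.
have jk' : j < k by lia.
pose f v := (v != ts j) && [exists b : 'I_k, (b <= j) && (v \in V b)].
have key : forall i w, i < k -> w \in V i -> w != ts j ->
    [exists b : 'I_k, (b <= j) && (w \in V b)] = (i <= j).
  move=> i w ik wi wc; case: (leqP i j) => ij.
    by apply/existsP; exists (Ordinal ik); rewrite ij wi.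
  apply/existsP => -[b /andP[bj wb]].
  have [e1 e2] := P2 Hc Hb (leq_ltn_trans bj ij) ik wb wi.
  have ej : i = j.+1 by lia.
  by move: wc; rewrite e2 ej -tsS ?eqxx //; lia.
have fs : f s.
  rewrite /f (eq_sym s) junc_s //=; apply/existsP; have k0 : 0 < k by lia.
  exists (Ordinal k0).
  by rewrite /= -s0 (ssV Hc Hb).

have : f s = f d.
  apply: (conn_inv _ h) => u v /and3P[a uc vc].
  have [i ik ai] : exists2 i, i < k & adj (E i) u v.
    by case/(EG Hc Hb): a => i ik hi; exists i.
  have [ui vi] := adj_in (okb Hc Hb ik) ai.
  by rewrite /f uc vc /= (key i u) // (key i v).
rewrite fs => /esym /andP[dn /existsP[b /andP[bj db]]].
by split=> //; exists b.
Qed.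

Lemma Ureach j b d : j < k.-1 -> b <= j -> d \in V b -> d != ts j ->
  connect (adjav EGG (ts j)) s d.
Proof.
move=> jk bj db dj.
have bk : b < k by lia.
apply: (reach Hc Hb (i:=b)) => //.
  move=> i' hi'; have ik : i' < k by lia.
  apply: block_avoid => //; first by apply: ss_ts; lia.
  by apply: ts_ts; lia.
case: (ltngtP b j) => hb; [|lia|].
  apply: conn_sub (blk_avoid Hc Hb bk (ts_notin_lower _ hb)) (ospP_conn (Hb bk) db).
  lia.
subst b; apply: conn_sub (blk_adjav Hc Hb bk) _.
exact (blk_O5 Hc Hb bk db dj).
Qed.

Definition sepG c := [&& c != s, c != t & ~~ connect (adjav EGG c) s t].

Lemma sep_ts j : j < k.-1 -> sepG (ts j).
Proof.
move=> jk; rewrite /sepG junc_s; last by lia.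
rewrite junc_t //=; apply/negP => /(SepA jk) [_ [b bj tb]].
have k1 : k.-1 < k by lia.
have tV : t \in V k.-1 by rewrite -tk; exact (tsV Hc Hb k1).
have [e1 e2] := P2 Hc Hb (leq_ltn_trans bj jk) k1 tb tV.
by have := sts Hc Hb k1; rewrite tk -e2 eqxx.
Qed.

Lemma sep_inv c : sepG c -> exists2 j, j < k.-1 & c = ts j.
Proof.
case/and3P=> cs ct nc.
case: (boolP [exists j : 'I_k.-1, c == ts j]) => [/existsP[j /eqP->]|hn].
  by exists j.
exfalso; move/negP: nc; apply.
have k1 : k.-1 < k by lia.
rewrite -tk; apply: (chainc Hc Hb) => // i ik.
have ik' : i < k by lia.
have nj : forall j, j < k.-1 -> c != ts j.
  move=> j jk; apply/negP => /eqP e; move/existsP: hn; apply.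
  by exists (Ordinal jk); rewrite e.
apply: block_avoid => //.
  case: i ik ik' => [|i] ik ik'; first by rewrite s0.
  by rewrite -tsS //; apply: nj; lia.
case: (ltnP i k.-1) => hi; first exact: nj.
have -> : i = k.-1 by lia.
by rewrite tk.
Qed.

Variable g : {perm T}.
Hypothesis Hg : aut_or G s t g.

Let hV : g @: gV G = gV G. Proof. by case: Hg. Qed.
Let hE : [set g @: e | e : {set T} in EGG] = EGG. Proof. by case: Hg. Qed.
Let gs : g s = s. Proof. by case: Hg. Qed.
Let gt : g t = t. Proof. by case: Hg. Qed.

Lemma conn_fix c v : g c = c ->
  connect (adjav EGG c) s (g v) = connect (adjav EGG c) s v.
Proof.
by move=> gc; rewrite -{1}gs -{1}gc conn_g.
Qed.

Lemma sepG_g c : sepG (g c) = sepG c.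
Proof.
rewrite /sepG.
have e1 : (g c != s) = (c != s) by rewrite -{1}gs (inj_eq perm_inj).
have e2 : (g c != t) = (c != t) by rewrite -{1}gt (inj_eq perm_inj).
have e3 : connect (adjav EGG (g c)) s t = connect (adjav EGG c) s t.
  by rewrite -{1}gs -{1}gt conn_g.
by rewrite e1 e2 e3.
Qed.

Lemma sr a b : a < k.-1 -> b < k.-1 ->
  connect (adjav EGG (ts a)) s (ts b) = (b < a).
Proof.
move=> ak bk; case: (ltnP b a) => h.
  apply: (Ureach ak (ltnW h)); first by apply (tsV Hc Hb); lia.
  by rewrite eq_sym; apply: ts_ts; lia.
apply/negP => /(SepA ak) [nb [b' b'a tb]].
move: h; rewrite leq_eqVlt => /orP[/eqP e|h]; first by rewrite e eqxx in nb.
have bk' : b < k by lia.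
by have := ts_notin_lower bk' (leq_ltn_trans b'a h); rewrite tb.
Qed.

Lemma g_ts j : j < k.-1 -> g (ts j) = ts j.
Proof.
elim/ltn_ind: j => j IH jk.
have [m mk gm] : exists2 m, m < k.-1 & g (ts j) = ts m.
  by apply: sep_inv; rewrite sepG_g; apply: sep_ts.
have [m' mk' gm'] : exists2 m, m < k.-1 & (g^-1)%g (ts j) = ts m.
  by apply: sep_inv; rewrite -sepG_g permKV; apply: sep_ts.
have gm'' : g (ts m') = ts j by rewrite -gm' permKV.
have tsi : forall a b, a < k.-1 -> b < k.-1 -> ts a = ts b -> a = b.
  by move=> a b ha hb; apply: ts_inj; lia.
case: (ltngtP m j) => hmj.
- have h1 := IH m hmj mk.
  have e : ts m = ts j by apply: (@perm_inj _ g); rewrite h1 gm.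
  have := tsi _ _ mk jk e; lia.
- case: (ltngtP m' j) => hm'.
  + have h1 := IH m' hm' mk'.
    have e : ts m' = ts j by rewrite -h1 gm''.
    have := tsi _ _ mk' jk e; lia.
  + have h1 := sr jk mk'.
    rewrite -(conn_g hE) gm gm'' gs (sr mk jk) hmj in h1.
    move/esym: h1 => h1; lia.
  + subst m'.
    have e : ts m = ts j by rewrite -gm gm''.
    have := tsi _ _ mk jk e; lia.
- by rewrite gm hmj.
Qed.

Lemma g_ts' i : i < k -> g (ts i) = ts i.
Proof.
move=> ik; case: (ltnP i k.-1) => hi; first exact: g_ts.
have -> : i = k.-1 by lia.
by rewrite tk gt.
Qed.

Lemma g_ss i : i < k -> g (ss i) = ss i.
Proof.
case: i => [|i] ik; first by rewrite s0 gs.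
by rewrite -tsS // g_ts //; lia.
Qed.

Lemma H2 i v : i < k -> v \in V i -> g v \in V i.
Proof.
move=> ik vi.
have [b bi gb] : exists2 b, b <= i & g v \in V b.
  case: (ltnP i k.-1) => hi.
    case: (eqVneq v (ts i)) => [->|vt].
      by exists i => //; rewrite g_ts //; exact (tsV Hc Hb ik).
    have h := Ureach hi (leqnn i) vi vt.
    rewrite -(conn_fix _ (g_ts hi)) in h.
    by have [_ [b bj gb]] := SepA hi h; exists b.
  have : g v \in gV G by rewrite -hV; apply: imset_f; apply/(VG Hc Hb); exists i.
  by case/(VG Hc Hb) => b bk gb; exists b => //; lia.
case: (eqVneq b i) => [<-//|bn].
have bi' : b < i by lia.
have jk : i.-1 < k.-1 by lia.
have tsj : ts i.-1 = ss i by rewrite tsS; [congr ss; lia | lia].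
case: (eqVneq (g v) (ts i.-1)) => [e|gn].
  by rewrite e tsj; exact (ssV Hc Hb ik).
have h := Ureach jk (j:=i.-1) (b:=b) ltac:(lia) gb gn.
rewrite conn_fix in h; last exact: g_ts.
have [vn [b' b'j vb']] := SepA jk h.
have [_ e] := P2 Hc Hb (i:=b') (j:=i) ltac:(lia) ik vb' vi.
by rewrite e -tsj eqxx in vn.
Qed.

Lemma aut_blk i : i < k -> aut_or (Gs i) (ss i) (ts i) g.
Proof.
move=> ik; split; last 2 first.
- exact: g_ss.
- exact: g_ts'.
- apply/eqP; rewrite eqEcard card_imset; last exact: perm_inj.
  rewrite leqnn andbT; apply/subsetP => _ /imsetP[v vi ->]; exact: H2.
apply/eqP; rewrite eqEcard card_imset; last by apply: imset_inj; exact: perm_inj.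
rewrite leqnn andbT; apply/subsetP => _ /imsetP[e ei ->].
have [x [y [xy ee xV yV]]] := okb Hc Hb ik ei.
have eG : e \in EGG by apply/(EG Hc Hb); exists i.
have : g @: e \in EGG by rewrite -hE; apply: imset_f.
rewrite ee imsetU1 imset_set1 => /(EG Hc Hb) [j jk hj].
have [gxj gyj] := adj_in (okb Hc Hb jk) hj.
case: (eqVneq i j) => [eij|ij]; first by rewrite eij.
exfalso.
have := VV2 Hc Hb ik jk ij (H2 ik xV) gxj (H2 ik yV) gyj => /perm_inj e'.
by rewrite e' eqxx in xy.
Qed.

End Main.

Lemma fchoice (A : Type) (a0 : A) (P : nat -> A -> Prop) n :
  (forall i, i < n -> exists x, P i x) -> exists f : nat -> A, forall i, i < n -> P i (f i).
Proof.
elim: n => [|n IH] h; first by exists (fun _ => a0).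
have [f hf] := IH (fun i hi => h i (ltnW hi)).
have [x hx] := h n (ltnSn n).
exists (fun i => if i == n then x else f i) => i hi.
case: (eqVneq i n) => [->//|ne]; apply: hf; lia.
Qed.

Section Final.
Variables (T : finType) (k : nat) (Gs : nat -> graph T) (ss ts : nat -> T)
  (G : graph T) (s t : T).
Hypothesis Hc : serial_cond k Gs ss ts G s t.
Hypothesis Hn : forall i, i < k -> nonserial (Gs i) (ss i) (ts i).

Local Notation V i := (gV (Gs i)).
Local Notation E i := (gE (Gs i)).
Local Notation EGG := (gE G).

Let Hb := Hb Hn.
Let tsS := tsS Hc Hb.
Let s0 := s0 Hc Hb.
Let tk := tk Hc Hb.
Let k2 := k2 Hc Hb.

Definition restr i (Y : graph T) : graph T := (V i, gE Y :&: E i).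

Definition rr i v := if v \in V i then v
  else if [exists a : 'I_k, (a < i) && (v \in V a)] then ss i else ts i.

Lemma rr_in i v : v \in V i -> rr i v = v.
Proof. by rewrite /rr => ->. Qed.

Lemma rr_out i j u : i < k -> j < k -> j != i -> u \in V j ->
  rr i u = if j < i then ss i else ts i.
Proof.
move=> ik jk ji uj; rewrite /rr; case: (ltngtP j i) => h; last by rewrite h eqxx in ji.
- case: ifP => ui; first by have [_ ->] := P2 Hc Hb h ik uj ui.
  by case: ifP => // /existsP; case; exists (Ordinal jk); rewrite h uj.
- case: ifP => ui.
    have [e ->] := P2 Hc Hb h jk ui uj; subst j; exact: esym (tsS jk).
  case: ifP => // /existsP[a /andP[ai ua]].
  have [e _] := P2 Hc Hb (ltn_trans ai h) jk ua uj; lia.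
Qed.

Lemma rr_blk i j u v : i < k -> j < k -> j != i -> u \in V j -> v \in V j ->
  rr i u = rr i v.
Proof. by move=> ik jk ji uj vj; rewrite (rr_out ik jk ji uj) (rr_out ik jk ji vj). Qed.

Lemma Edisj i j e : i < k -> j < k -> i != j -> e \in E i -> e \in E j -> False.
Proof.
move=> ik jk ij ei ej.
have [x [y [xy ee xV yV]]] := okb Hc Hb ik ei.
have : adj (E j) x y by rewrite /adj -ee.
case/(adj_in (okb Hc Hb jk)) => xj yj.
by have := VV2 Hc Hb ik jk ij xV xj yV yj => e'; rewrite e' eqxx in xy.
Qed.

Lemma ST_restr Y i : spanning_tree G Y -> i < k -> spanning_tree (Gs i) (restr i Y).
Proof.
case=> hV hE [hc ha] ik; split => //; first exact: subsetIr.
split.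
  move=> x y /= xi yi.
  have xY : x \in gV Y by rewrite hV; apply/(VG Hc Hb); exists i.
  have yY : y \in gV Y by rewrite hV; apply/(VG Hc Hb); exists i.
  have := @conn_map _ (adj (gE Y)) (adj (gE Y :&: E i)) (rr i) x y _ (hc x y xY yY).
  rewrite !rr_in //; apply => u v huv.
  have : [set u; v] \in EGG by apply: (subsetP hE).
  case/(EG Hc Hb) => j jk hj.
  have [uj vj] := adj_in (okb Hc Hb jk) hj.
  case: (eqVneq j i) => [eji|ji]; last by left; apply: rr_blk ji uj vj.
  subst j; right; rewrite !rr_in //.
  by rewrite /adj inE; apply/andP.
move=> c hc3 /andP[cy uc]; apply: (ha c hc3).
apply/andP; split=> //; apply: sub_cycle cy => u v.
by rewrite /adj /= inE => /andP[].
Qed.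

Lemma ST_union (f : nat -> graph T) :
  (forall i, i < k -> spanning_tree (Gs i) (f i)) -> spanning_tree G (gunion k f).
Proof.
move=> hf.
have fV : forall i, i < k -> gV (f i) = V i by move=> i /hf[].
have fE : forall i, i < k -> gE (f i) \subset E i by move=> i /hf[].
have Vu : gV (gunion k f) = gV G.
  rewrite (GU Hc Hb) /gunion /gV /=; apply: eq_bigr => i _; exact: fV.
split=> //.
  apply/subsetP => e /gunionE[i ik hi]; apply/(EG Hc Hb); exists i => //.
  exact: (subsetP (fE i ik)).
split.
  have hs : forall v, v \in gV G -> connect (adj (gE (gunion k f))) s v.
    move=> v /(VG Hc Hb)[i ik vi].
    have bc : forall j x y, j < k -> x \in V j -> y \in V j ->
        connect (adj (gE (gunion k f))) x y.
      move=> j x y jk xj yj; apply: conn_sub (adj_gunion jk) _.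
      by case: (hf j jk) => hV _ [hc _]; apply: hc; rewrite hV.
    apply: (reach Hc Hb (i:=i)) => //.
      move=> i' hi'; have ik' : i' < k by lia.
      exact: (bc i' _ _ ik' (ssV Hc Hb ik') (tsV Hc Hb ik')).
    exact: (bc i _ _ ik (ssV Hc Hb ik) vi).
  move=> x y; rewrite Vu => xV yV.
  apply: connect_trans (hs y yV).
  by rewrite (sym_connect_sym (adj_sym _)); apply: hs.
apply: C2 => x y xy exy.
case/gunionE: (exy) => i ik hi.
have [xi yi] : x \in V i /\ y \in V i.
  by apply: adj_in (okb Hc Hb ik) _; apply: (subsetP (fE i ik)).
have acf : acyc2 (gE (f i)) by apply: C1; case: (hf i ik) => _ _ [].
move=> hcon; apply: (acf x y xy hi).
have := @conn_map _ _ (adj (gE (f i) :\ [set x; y])) (rr i) x y _ hcon.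
rewrite !rr_in //; apply => u v.
rewrite /adj in_setD1 => /andP[ne /gunionE[j jk hj]].
have hjE : [set u; v] \in E j by apply: (subsetP (fE j jk)).
have [uj vj] := adj_in (okb Hc Hb jk) hjE.
case: (eqVneq j i) => [eji|ji]; last by left; apply: rr_blk ji uj vj.
subst j; right; rewrite !rr_in //.
by rewrite /adj in_setD1 ne hj.
Qed.

Lemma restr_union (f : nat -> graph T) i :
  (forall j, j < k -> spanning_tree (Gs j) (f j)) -> i < k -> restr i (gunion k f) = f i.
Proof.
move=> hf ik; case: (hf i ik) => fV fE _.
rewrite /restr; apply: injective_projections => /=; first by rewrite -fV.
apply/setP => e; rewrite inE; apply/andP/idP => [[/gunionE[j jk hj] ei]|h].
  case: (eqVneq j i) => [<-//|ji]; exfalso.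
  by case: (hf j jk) => _ fE' _; apply: (Edisj jk ik ji (subsetP fE' _ hj) ei).
by split; [apply/gunionE; exists i | apply: (subsetP fE)].
Qed.

Lemma restr_gact (g : {perm T}) Y i : aut_or G s t g -> i < k ->
  restr i (gact g Y) = gact g (restr i Y).
Proof.
move=> ag ik; case: (aut_blk Hc Hn ag ik) => hV hE _ _.
rewrite /restr /gact /= hV; congr pair.
rewrite imsetI; first by rewrite /gE /= hE.
by apply: in2W; apply: imset_inj; apply: perm_inj.
Qed.

Section Glue.
Variable gs : nat -> {perm T}.
Hypothesis Hgs : forall i, i < k -> aut_or (Gs i) (ss i) (ts i) (gs i).

Definition hfun v := if [pick a : 'I_k | v \in V a] is Some a then gs a v else v.

Lemma junc_fix a i v : a < k -> i < k -> a != i -> v \in V a -> v \in V i -> gs a v = v.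
Proof.
move=> ak ik ai va vi; case: (ltngtP a i) => h; last by rewrite h eqxx in ai.
  have [e ->] := P2 Hc Hb h ik va vi; subst i.
  by rewrite -tsS //; case: (Hgs ak).
have [e ->] := P2 Hc Hb h ak vi va; subst a.
by case: (Hgs ak).
Qed.

Lemma h_on i v : i < k -> v \in V i -> hfun v = gs i v.
Proof.
move=> ik vi; rewrite /hfun; case: pickP => [a va|none].
  case: (eqVneq (a : nat) i) => [<-//|ne].
  by rewrite (junc_fix (ltn_ord a) ik ne va vi) (junc_fix ik (ltn_ord a) _ vi va) // eq_sym.
by have := none (Ordinal ik); rewrite vi.
Qed.

Lemma gsV i v : i < k -> v \in V i -> gs i v \in V i.
Proof. by move=> ik vi; case: (Hgs ik) => <- _ _ _; apply: imset_f. Qed.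

Lemma h_out v : (forall i, i < k -> v \notin V i) -> hfun v = v.
Proof.
move=> h; rewrite /hfun; case: pickP => [a va|//].
by have := h a (ltn_ord a); rewrite va.
Qed.

Lemma inV_dec v : (exists2 i, i < k & v \in V i) \/ (forall i, i < k -> v \notin V i).
Proof.
case: (boolP [exists a : 'I_k, v \in V a]) => [/existsP[a va]|hn].
  by left; exists a.
right => i ik; apply/negP => vi; move/existsP: hn; apply; by exists (Ordinal ik).
Qed.

Lemma hinj : injective hfun.
Proof.
move=> u v.
case: (inV_dec u) => [[i ik ui]|nu]; case: (inV_dec v) => [[j jk vj]|nv].
- rewrite (h_on ik ui) (h_on jk vj) => e.
  case: (eqVneq i j) => [eij|ij]; first by subst j; apply: perm_inj e.
  have wi := gsV ik ui; have wj := gsV jk vj; rewrite -e in wj.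
  have f1 := junc_fix ik jk ij wi wj.
  have f2 : gs j (gs i u) = gs i u by apply: junc_fix jk ik _ wj wi; rewrite eq_sym.
  have eu : u = gs i u by apply: (@perm_inj _ (gs i)); rewrite f1.
  have ev : v = gs i u by apply: (@perm_inj _ (gs j)); rewrite -e f2 e.
  by rewrite eu ev.
- rewrite (h_on ik ui) (h_out nv) => e.
  by have := nv i ik; rewrite -e gsV.
- rewrite (h_out nu) (h_on jk vj) => e.
  by have := nu j jk; rewrite e gsV.
by rewrite (h_out nu) (h_out nv).
Qed.

Definition hp : {perm T} := perm hinj.

Lemma hp_on i v : i < k -> v \in V i -> hp v = gs i v.
Proof. by move=> ik vi; rewrite permE; apply: h_on. Qed.

Lemma hp_e i e : i < k -> e \in E i -> hp @: e = gs i @: e.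
Proof.
move=> ik ei; apply: eq_in_imset => v ve; apply: hp_on => //.
have [x [y [_ ee xV yV]]] := okb Hc Hb ik ei.
by move: ve; rewrite ee !inE => /orP[]/eqP->.
Qed.

Lemma hp_V : hp @: gV G = gV G.
Proof.
apply/setP => x; apply/imsetP/idP => [[v /(VG Hc Hb)[i ik vi] ->]|].
  by apply/(VG Hc Hb); exists i => //; rewrite (hp_on ik vi) gsV.
case/(VG Hc Hb) => i ik xi.
have : x \in gs i @: V i by case: (Hgs ik) => -> _ _ _.
case/imsetP => y yi ->; exists y; first by apply/(VG Hc Hb); exists i.
by rewrite (hp_on ik yi).
Qed.

Lemma hp_aut : aut_or G s t hp.
Proof.
split.
- exact: hp_V.
- apply/setP => x; apply/imsetP/idP => [[e /(EG Hc Hb)[i ik ei] ->]|].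
    apply/(EG Hc Hb); exists i => //; rewrite (hp_e ik ei).
    by case: (Hgs ik) => _ <- _ _; apply: imset_f.
  case/(EG Hc Hb) => i ik xi.
  have : x \in [set gs i @: e | e : {set T} in E i] by case: (Hgs ik) => _ -> _ _.
  case/imsetP => e ei ->; exists e; first by apply/(EG Hc Hb); exists i.
  by rewrite (hp_e ik ei).
- have k0 : 0 < k by lia.
  by rewrite -s0 (hp_on k0 (ssV Hc Hb k0)); case: (Hgs k0).
have k1 : k.-1 < k by lia.
by rewrite -tk (hp_on k1 (tsV Hc Hb k1)); case: (Hgs k1).
Qed.

Lemma hp_gact Y : spanning_tree G Y ->
  gact hp Y = gunion k (fun i => gact (gs i) (restr i Y)).
Proof.
case=> hV hE _.
rewrite /gact /gunion; apply: injective_projections => /=.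
  rewrite hV hp_V (GU Hc Hb) /gunion /gV /=; apply: eq_bigr => i _.
  by case: (Hgs (ltn_ord i)) => ->.
apply/setP => x; apply/imsetP/bigcupP => [[e eY ->]|[i _ /imsetP[e]]].
  have : e \in EGG by apply: (subsetP hE).
  case/(EG Hc Hb) => i ik ei; exists (Ordinal ik) => //.
  by rewrite /gE /= (hp_e ik ei); apply: imset_f; rewrite inE eY.
rewrite /gE /= inE => /andP[eY ei] ->; exists e => //.
by rewrite (hp_e (ltn_ord i) ei).
Qed.

End Glue.


Variable Tfam : nat -> graph T -> Prop.
Hypothesis Htr : forall i, i < k -> orbit_transversal (Gs i) (ss i) (ts i) (Tfam i).

Lemma main : orbit_transversal G s t
    (fun X => exists f : nat -> graph T,
        (forall i, i < k -> Tfam i (f i)) /\ X = gunion k f).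
Proof.
have Tst : forall i X, i < k -> Tfam i X -> spanning_tree (Gs i) X.
  by move=> i X ik; case: (Htr ik) => h _; apply: h.
split.
  move=> X [f [hf ->]]; apply: ST_union => i ik; exact: Tst i _ ik (hf i ik).
move=> Y hY.
have hex : forall i, i < k -> exists p : graph T * {perm T},
    [/\ Tfam i p.1, aut_or (Gs i) (ss i) (ts i) p.2 & p.1 = gact p.2 (restr i Y)].
  move=> i ik; case: (Htr ik) => _ h.
  have [X [[tX [g [ag eX]]] _]] := h _ (ST_restr hY ik).
  by exists (X, g).
have [F hF] := fchoice (Y, 1%g) hex.
pose f i := (F i).1. pose gs i := (F i).2.
have Hgs : forall i, i < k -> aut_or (Gs i) (ss i) (ts i) (gs i) by move=> i /hF[].
have hf : forall i, i < k -> Tfam i (f i) by move=> i /hF[].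
have ef : forall i, i < k -> f i = gact (gs i) (restr i Y) by move=> i /hF[].
exists (gunion k f); split.
  split; first by exists f.
  exists (hp Hgs); split; first exact: hp_aut.
  rewrite hp_gact //; rewrite /gunion; congr pair; apply: eq_bigr => i _; rewrite ef //.
move=> X' [[f' [hf' ->]] [g' [ag' eX']]].
have sf' : forall i, i < k -> spanning_tree (Gs i) (f' i).
  by move=> i ik; apply: Tst (hf' i ik).
have eqf : forall i, i < k -> f i = f' i.
  move=> i ik; case: (Htr ik) => _ h.
  have [X0 [_ u]] := h _ (ST_restr hY ik).
  have e1 := u (f i) (conj (hf i ik) (ex_intro _ (gs i) (conj (Hgs i ik) (ef i ik)))).
  have P2' : same_orbit (Gs i) (ss i) (ts i) (f' i) (restr i Y).
    exists g'; split; first exact (aut_blk Hc Hn ag' ik).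
    by rewrite -(restr_union sf' ik) eX' restr_gact.
  have e2 := u (f' i) (conj (hf' i ik) P2').
  by rewrite -e1 -e2.
rewrite /gunion; congr pair; apply: eq_bigr => i _; rewrite eqf //.
Qed.

End Final.

Unset Implicit Arguments.

Theorem theorem5p4 (T : finType) (G : graph T) (s t : T) (k : nat)
    (Gs : nat -> graph T) (ss ts : nat -> T)
    (Tfam : nat -> graph T -> Prop) :
  s != t ->
  serial_cond k Gs ss ts G s t ->
  (forall i, i < k -> nonserial (Gs i) (ss i) (ts i)) ->
  (forall i, i < k -> orbit_transversal (Gs i) (ss i) (ts i) (Tfam i)) ->
  orbit_transversal G s t
    (fun X => exists f : nat -> graph T,
        (forall i, i < k -> Tfam i (f i)) /\ X = gunion k f).
Proof. move=> _ Hc Hn Htr; exact (main Hc Hn Htr). Qed.
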